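(* At the end of every iteration of the main loop of MAPTree, for every OR node $u\in\mathcal G'$, $UB[u]$ equals the minimum cost of a partial solution rooted at $u$ in $\mathcal G'$ (and $UB[u]=+\infty$ if no such partial solution exists).
   Context: Let $x_1,\dots,x_N\in\{0,1\}^F$ be a binary dataset $\mathcal X$ with labels $\mathcal Y\in\{0,1\}^N$, $[N]=\{1,\dots,N\}$. For $\mathcal I\subseteq[N]$, $f\in[F]$, $k\in\{0,1\}$ let $\mathcal I|_{f=k}=\{i\in\mathcal I:(x_i)_f=k\}$, $c^k(\mathcal I)=|\{i\in\mathcal I:y_i=k\}|$, $\mathcal V(\mathcal I)=\{f:\mathcal I|_{f=0}\neq\emptyset\text{ and }\mathcal I|_{f=1}\neq\emptyset\}$. Fix $\rho^1,\rho^0>0$, $\alpha\in(0,1)$, $\beta\ge0$; $\ell_{\rm leaf}(c^1,c^0)=B(c^1+\rho^1,c^0+\rho^0)/B(\rho^1,\rho^0)$ ($B$ the Beta function), $p_{\rm split}(d)=\alpha(1+d)^{-\beta}$, $p_{\rm leaf}(d,\mathcal I)=1$ if $\mathcal V(\mathcal I)=\emptyset$ else $1-p_{\rm split}(d)$, $p_{\rm inner}(d,\mathcal I)=0$ if $\mathcal V(\mathcal I)=\emptyset$ else $p_{\rm split}(d)/|\mathcal V(\mathcal I)|$; $-\log0=+\infty$, and a minimum over an empty set is $+\infty$. Graph $\mathcal G=\mathcal G_{\mathcal X,\mathcal Y}$: for nonempty $\mathcal I\subseteq[N]$, $d\in\{0,\dots,F\}$, an OR node $o_{\mathcal I,d}$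 with terminal child $t_{\mathcal I,d}$ (edge cost $-\log p_{\rm leaf}(d,\mathcal I)-\log\ell_{\rm leaf}(c^1(\mathcal I),c^0(\mathcal I))$); for $d<F$, $f\in\mathcal V(\mathcal I)$, an AND child $a_{\mathcal I,d,f}$ (edge cost $-\log p_{\rm inner}(d,\mathcal I)$) with cost-$0$ edges to $o_{\mathcal I|_{f=0},d+1}$, $o_{\mathcal I|_{f=1},d+1}$; root $r=o_{[N],0}$; only nodes reachable from $r$ kept. A partial solution rooted at an OR node $u$ in $\mathcal G'$ is a set $\mathcal S\subseteq\mathcal G'$ containing $u$, all of whose nodes are reachable from $u$ inside $\mathcal S$, such that every AND node of $\mathcal S$ has both children in $\mathcal S$ and every OR node of $\mathcal S$ has exactly one child in $\mathcal S$; its cost is the sum of the costs of edges $v\to w$ with $v,w\in\mathcal S$. Heuristic: $h(o_{\mathcal I,d})=-\max\{\log\ell_{\rm leaf}(c^1(\mathcal I),c^0(\mathcal I)),\log p_{\rm split}(d)+\log\ell_{\rm leaf}(c^1(\mathcal I),0)+\log\ell_{\rm leaf}(0,c^0(\mathcal I))\}$. MAPTree maintains a node set $\mathcal G'$, a set $\mathcal E$ of expanded OR nodes, and values $LB[u],UB[u]\in\mathbb R\cup\{+\infty\}$ for OR nodes ($UB[u]=+\infty$ until set); for an AND node $a$ with children $o_0,o_1$, $LB[a]=LB[o_0]+LB[o_1]$ and $UB[a]=UB[o_0]+UB[o_1]$. Initialize $\mathcal G'=\{r\}$, $\mathcal E=\emptyset$, $LB[r]=h(r)$, $UB[r]=+\infty$.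 While $LB[r]<UB[r]$ (and optionally while time remains): (1) $o:=r$; while $o\in\mathcal E$, choose an AND child $a^*$ of $o$ minimizing $\mathrm{cost}(o,a)+LB[a]$, with children $o_0$ (value-0 side) and $o_1$, and set $o:=o_0$ if $UB[o_0]-LB[o_0]>UB[o_1]-LB[o_1]$, else $o:=o_1$. (2) Add $o$ to $\mathcal E$ and its terminal child to $\mathcal G'$; for each AND child $a$ of $o$ with children $o_0,o_1$, add $a,o_0,o_1$ to $\mathcal G'$ and set $LB[o_0]:=h(o_0)$, $LB[o_1]:=h(o_1)$. (3) Starting from $Q=\{o\}$, repeatedly remove from $Q$ an OR node $u$ of maximal depth, compute $v=\min\{\min_a(\mathrm{cost}(u,a)+LB[a]),\mathrm{cost}(u,t_u)\}$ over the AND children $a$ and terminal child $t_u$ of $u$; if $v>LB[u]$, set $LB[u]:=v$ and add to $Q$ every OR node of $\mathcal G'$ that is the parent of an AND node of $\mathcal G'$ having $u$ as child. (4) The same with $UB$ in place of $LB$, updating when $v<UB[u]$. *)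

(* Defs.v *)
From HB Require Import structures.
From mathcomp Require Import all_boot all_order all_algebra.
From mathcomp Require Import all_classical all_reals all_analysis.
Import Order.TTheory GRing.Theory Num.Theory.
Local Open Scope ring_scope.


Definition BetaR {R : realType} (a b : R) : R :=
  fine (\int[@lebesgue_measure R]_(t in `]0%R, 1%R[%classic)
          ((t `^ (a - 1)) * ((1 - t) `^ (b - 1)))%:E)%E.

Section MAPTree.
Variables (R : realType) (N F : nat).
Variables (X : 'I_N -> 'I_F -> bool) (Y : 'I_N -> bool).
Variables (rho1 rho0 alpha beta : R).

Definition orkey := ({set 'I_N} * 'I_F.+1)%type.
Definition node := (orkey + orkey + (orkey * 'I_F))%type.
Definition OrN (J : {set 'I_N}) (d : 'I_F.+1) : node := inl (inl (J, d)).
Definition TermN (J : {set 'I_N}) (d : 'I_F.+1) : node := inl (inr (J, d)).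
Definition AndN (J : {set 'I_N}) (d : 'I_F.+1) (f : 'I_F) : node := inr ((J, d), f).

Definition isOr (u : node) : bool := if u is inl (inl _) then true else false.
Definition isAnd (u : node) : bool := if u is inr _ then true else false.
Definition depth (u : node) : nat :=
  match u with
  | inl (inl (_, d)) | inl (inr (_, d)) | inr ((_, d), _) => d
  end.

Definition restr (J : {set 'I_N}) (f : 'I_F) (k : bool) : {set 'I_N} :=
  [set i in J | X i f == k].
Definition Vset (J : {set 'I_N}) : {set 'I_F} :=
  [set f : 'I_F | (restr J f false != finset.set0) && (restr J f true != finset.set0)].
Definition cnt (k : bool) (J : {set 'I_N}) : nat := #|[set i in J | Y i == k]|.

Definition dsucc (d : 'I_F.+1) : 'I_F.+1 := inord d.+1.

(* children of an AND node a_{J,d,f}: k = false is the value-0 side o_0 *)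
Definition andch (k : bool) (a : node) : node :=
  match a with inr ((J, d), f) => OrN (restr J f k) (dsucc d) | _ => a end.
Definition term (u : node) : node :=
  match u with inl (inl (J, d)) => TermN J d | _ => u end.

Definition edge (u w : node) : bool :=
  match u, w with
  | inl (inl (J, d)), inl (inr (J', d')) =>
      (J != finset.set0) && (J' == J) && (d' == d)
  | inl (inl (J, d)), inr ((J', d'), f) =>
      [&& J != finset.set0, J' == J, d' == d, (d < F)%N & f \in Vset J]
  | inr ((J, d), f), inl (inl (J', d')) =>
      [&& J != finset.set0, (d < F)%N, f \in Vset J, d' == dsucc d &
          (J' == restr J f false) || (J' == restr J f true)]
  | _, _ => false
  end.

Definition root : node := OrN [set: 'I_N] ord0.

Definition nlog (x : R) : \bar R := if x <= 0 then +oo%E else (- ln x)%:E.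
Definition psplit (d : nat) : R := alpha * (1 + d%:R) `^ (- beta).
Definition lleaf (c1 c0 : nat) : R :=
  BetaR (c1%:R + rho1) (c0%:R + rho0) / BetaR rho1 rho0.
Definition pleaf (d : nat) (J : {set 'I_N}) : R :=
  if Vset J == finset.set0 then 1 else 1 - psplit d.
Definition pinner (d : nat) (J : {set 'I_N}) : R :=
  if Vset J == finset.set0 then 0 else psplit d / #|Vset J|%:R.

(* cost of the edge u -> w (meaningful when edge u w) *)
Definition ecost (u w : node) : \bar R :=
  match u, w with
  | inl (inl (J, d)), inl (inr _) =>
      (nlog (pleaf d J) + nlog (lleaf (cnt true J) (cnt false J)))%E
  | inl (inl (J, d)), inr _ => nlog (pinner d J)
  | _, _ => 0%E
  end.

Definition h (u : node) : \bar R :=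
  match u with
  | inl (inl (J, d)) =>
      (- Order.max (ln (lleaf (cnt true J) (cnt false J)))
           (ln (psplit d) + ln (lleaf (cnt true J) 0)
              + ln (lleaf 0 (cnt false J))))%:E
  | _ => 0%E
  end.

Definition partial_sol (Gp : {set node}) (u : node) (S : {set node}) : bool :=
  [&& S \subset Gp, u \in S,
      [forall v in S, connect [rel x y | [&& edge x y, x \in S & y \in S]] u v],
      [forall a in S, isAnd a ==> [forall w, edge a w ==> (w \in S)]] &
      [forall o in S, isOr o ==> (#|[set w in S | edge o w]| == 1)%N]].

Definition ps_cost (S : {set node}) : \bar R :=
  (\sum_(v in S) \sum_(w in S | edge v w) ecost v w)%E.

Definition min_ps (Gp : {set node}) (u : node) : \bar R :=
  \big[Order.min/+oo%E]_(S : {set node} | partial_sol Gp u S) ps_cost S.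

Record state := State {
  Gp : {set node};
  Ex : {set node};
  LB : node -> \bar R;
  UB : node -> \bar R }.

(* LB / UB of an AND node *)
Definition valA (v : node -> \bar R) (a : node) : \bar R :=
  (v (andch false a) + v (andch true a))%E.

Definition init : state := State [set root] finset.set0 h (fun _ => +oo%E).

Definition gap (s : state) (o : node) : \bar R := (UB s o - LB s o)%E.

(* step (1): descent from the root to a non-expanded OR node
   (ties broken arbitrarily) *)
Inductive descend (s : state) : node -> node -> Prop :=
| desc_stop o : o \notin Ex s -> descend s o o
| desc_step o a o' : o \in Ex s -> edge o a -> isAnd a ->
    (forall a', edge o a' -> isAnd a' ->
       (ecost o a + valA (LB s) a <= ecost o a' + valA (LB s) a')%E) ->
    descend s (if (gap s (andch true a) < gap s (andch false a))%E
               then andch false a else andch true a) o' ->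
    descend s o o'.

Definition expand (s : state) (o : node) : state :=
  State (Gp s :|: [set w | edge o w] :|: [set w | [exists a, edge o a && edge a w]])
        (o |: Ex s)
        (fun w => if [exists a, [&& edge o a, isAnd a & edge a w]] then h w else LB s w)
        (UB s).

Definition orval (v : node -> \bar R) (u : node) : \bar R :=
  Order.min (\big[Order.min/+oo%E]_(a | edge u a && isAnd a) (ecost u a + valA v a)%E)
            (ecost u (term u)).

Definition parents (G' : {set node}) (u : node) : {set node} :=
  [set w in G' | isOr w && [exists a in G', [&& isAnd a, edge w a & edge a u]]].

(* steps (3)/(4): backward propagation with queue Q; [better new old] is
   new > old for LB and new < old for UB; removal of a node of maximal depth
   (ties broken arbitrarily) *)
Inductive propagate (better : \bar R -> \bar R -> bool) (G' : {set node}) :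
    {set node} -> (node -> \bar R) -> (node -> \bar R) -> Prop :=
| prop_done v : propagate better G' finset.set0 v v
| prop_step (Q : {set node}) (v v' : node -> \bar R) (u : node) : u \in Q -> (forall w, w \in Q -> (depth w <= depth u)%N) ->
    propagate better G'
      (if better (orval v u) (v u) then (Q :\ u) :|: parents G' u else Q :\ u)
      (if better (orval v u) (v u)
       then (fun w => if w == u then orval v u else v w) else v) v' ->
    propagate better G' Q v v'.

Definition iteration (s s' : state) : Prop :=
  (LB s root < UB s root)%E /\
  exists o, descend s root o /\
    exists lb ub,
      propagate (fun nw old => old < nw)%E (Gp (expand s o)) [set o] (LB (expand s o)) lb /\
      propagate (fun nw old => nw < old)%E (Gp (expand s o)) [set o] (UB (expand s o)) ub /\
      s' = State (Gp (expand s o)) (Ex (expand s o)) lb ub.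

Inductive reachable : state -> Prop :=
| reach_init : reachable init
| reach_step s s' : reachable s -> iteration s s' -> reachable s'.

End MAPTree.

Arguments Gp {R N F} s.
Arguments Ex {R N F} s.
Arguments LB {R N F} s _.
Arguments UB {R N F} s _.

(* Main.v *)
Require Import Defs.
From HB Require Import structures.
From mathcomp Require Import all_boot all_order all_algebra.
From mathcomp Require Import all_classical all_reals all_analysis.
From mathcomp Require Import zify.
Import Order.TTheory GRing.Theory Num.Theory.
Local Open Scope ring_scope.
Set Implicit Arguments. Unset Strict Implicit.

Section Proof.
Variables (R : realType) (N F : nat).
Variables (X : 'I_N -> 'I_F -> bool) (Y : 'I_N -> bool).
Variables (rho1 rho0 alpha beta : R).

Local Notation node := (node N F).
Local Notation edge := (edge N F X).
Local Notation isOr := (isOr N F).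
Local Notation isAnd := (isAnd N F).
Local Notation depth := (depth N F).
Local Notation andch := (andch N F X).
Local Notation ecost := (ecost R N F X Y rho1 rho0 alpha beta).
Local Notation ps_cost := (ps_cost R N F X Y rho1 rho0 alpha beta).
Local Notation partial_sol := (partial_sol N F X).
Local Notation min_ps := (min_ps R N F X Y rho1 rho0 alpha beta).
Local Notation orval := (orval R N F X Y rho1 rho0 alpha beta).
Local Notation valA := (valA R N F X).
Local Notation term := (term N F).

Definition nodeset (u : node) : {set 'I_N} :=
  match u with
  | inl (inl (J, _)) | inl (inr (J, _)) | inr ((J, _), _) => J
  end.
Definition rank (u : node) : nat := (depth u).*2 + ~~ isOr u.

Lemma dsuccE (d : 'I_F.+1) : (d < F)%N -> nat_of_ord (dsucc F d) = d.+1.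
Proof. by move=> h; rewrite /dsucc inordK. Qed.

Lemma edge_rank x y : edge x y -> rank y = (rank x).+1.
Proof.
case: x => [[[J d]|[J d]]|[[J d] f]]; case: y => [[[J' d']|[J' d']]|[[J' d'] f']] //=;
rewrite /rank /=.
- by case/andP=> /andP[_ _] /eqP ->; rewrite addn1 addn0.
- by case/and5P=> _ _ /eqP -> _ _; rewrite addn1 addn0.
- case/and5P=> _ hd _ /eqP -> _; rewrite dsuccE // addn0 addn1.
  by rewrite doubleS.
Qed.

Lemma edge_set x y : edge x y ->
  [/\ nodeset y \subset nodeset x, nodeset y != finset.set0 & nodeset x != finset.set0].
Proof.
case: x => [[[J d]|[J d]]|[[J d] f]]; case: y => [[[J' d']|[J' d']]|[[J' d'] f']] //=.
- by case/andP=> /andP[hJ /eqP ->] _; rewrite subxx hJ.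
- by case/and5P=> hJ /eqP -> _ _ _; rewrite subxx hJ.
- case/and5P=> hJ _; rewrite /Vset inE => /andP[h0 h1] _ /orP[]/eqP ->; rewrite hJ ?h0 ?h1;
  by split=> //; apply/fintype.subsetP=> i; rewrite /restr inE => /andP[].
Qed.

Lemma edge_isOr x y : edge x y -> isOr x = ~~ isOr y.
Proof.
by case: x => [[[J d]|[J d]]|[[J d] f]]; case: y => [[[J' d']|[J' d']]|[[J' d'] f']].
Qed.

Lemma edge_notAnd_src x y : edge x y -> isOr x || isAnd x.
Proof. by case: x => [[[J d]|[J d]]|[[J d] f]]. Qed.

Lemma edge_andch a k o : edge o a -> isAnd a -> edge a (andch k a).
Proof.
case: o => [[[J d]|[J d]]|[[J d] f]]; case: a => [[[J' d']|[J' d']]|[[J' d'] f']] //= + _.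
case/and5P=> hJ /eqP -> /eqP -> hd hf; rewrite hJ hd hf eqxx /=.
by case: k; rewrite eqxx ?orbT.
Qed.

Lemma isOr_andch a k : isAnd a -> isOr (andch k a).
Proof. by case: a => [[[J d]|[J d]]|[[J d] f]]. Qed.

Lemma edge_and_inv a w : isAnd a -> edge a w -> w = andch false a \/ w = andch true a.
Proof.
case: a => [[[J d]|[J d]]|[[J d] f]] //= _.
case: w => [[[J' d']|[J' d']]|[[J' d'] f']] //=.
case/and5P=> _ _ _ /eqP -> /orP[]/eqP ->; [left|right]; done.
Qed.

Lemma edge_or_uniq x o y : isOr x -> isOr o -> edge x y -> edge o y -> x = o.
Proof.
case: x => [[[J d]|[J d]]|[[J d] f]] //=; case: o => [[[J' d']|[J' d']]|[[J' d'] f']] //=.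
case: y => [[[J'' d'']|[J'' d'']]|[[J'' d''] f'']] //= _ _.
- by case/andP=> /andP[_ /eqP ->] /eqP -> /andP[/andP[_ /eqP ->] /eqP ->].
- by case/and5P=> _ /eqP -> /eqP -> _ _ /and5P[_ /eqP -> /eqP -> _ _].
Qed.

Lemma restr_disj (J : {set 'I_N}) f : [disjoint restr N F X J f false & restr N F X J f true].
Proof.
rewrite -setI_eq0; apply/eqP/setP=> i; rewrite !inE.
by case: (X i f); rewrite ?andbF ?andbT.
Qed.

Lemma andch_set a k : isAnd a ->
  exists J d f, a = AndN N F J d f /\ andch k a = OrN N F (restr N F X J f k) (dsucc F d).
Proof. by case: a => [[[J d]|[J d]]|[[J d] f]] //= _; exists J, d, f. Qed.


Local Notation er S := [rel x y | [&& edge x y, x \in S & y \in S]].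

Lemma connect_ind_from (T : finType) (e : rel T) c (P : T -> Prop) :
  P c -> (forall x y, connect e c x -> P x -> e x y -> P y) ->
  forall v, connect e c v -> P v.
Proof.
move=> Pc H v /connectP[p]; elim/last_ind: p v => [|p z IH] v /=.
  by move=> _ ->.
rewrite rcons_path last_rcons => /andP[hp hz] ->.
apply: (H (last c p)) => //; last by apply: IH.
by apply/connectP; exists p.
Qed.

Definition reach (S : {set node}) c : {set node} := [set v | connect (er S) c v].

Definition rooted c (B : {set node}) :=
  forall v, v \in B -> [/\ (rank c <= rank v)%N, nodeset v \subset nodeset c & nodeset v != finset.set0].

Lemma rooted_connect c (S : {set node}) : nodeset c != finset.set0 ->
  forall v, connect (er S) c v ->
  [/\ (rank c <= rank v)%N, nodeset v \subset nodeset c & nodeset v != finset.set0].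
Proof.
move=> hc; apply: connect_ind_from; first by rewrite leqnn subxx hc.
move=> x y _ [h1 h2 h3] /= /and3P[hxy _ _].
have [s1 s2 _] := edge_set hxy.
rewrite (edge_rank hxy) s2; split=> //; first by apply: leqW.
exact: fintype.subset_trans s1 h2.
Qed.

Lemma reach_sub (S : {set node}) c : c \in S -> reach S c \subset S.
Proof.
move=> cS; apply/fintype.subsetP=> v; rewrite inE.
by move: v; apply: (connect_ind_from (P := fun v => v \in S)) => // x y _ _ /and3P[].
Qed.

Lemma ps_reach G u S c : partial_sol G u S -> c \in S ->
  partial_sol G c (reach S c).
Proof.
case/and5P=> sG uS hconn hand hor cS.
have RS := reach_sub cS.
have Rc : c \in reach S c by rewrite inE connect0.
have Rstep : forall x y, x \in reach S c -> y \in S -> edge x y -> y \in reach S c.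
  move=> x y; rewrite !inE => hx yS hxy; apply: connect_trans (hx) _.
  apply: connect1 => /=; rewrite hxy yS andbT.
  by apply: (fintype.subsetP RS); rewrite inE.
apply/and5P; split=> //.
- exact: fintype.subset_trans RS sG.
- apply/forall_inP=> v; rewrite inE; move: v.
  apply: (connect_ind_from (P := fun v => connect (er (reach S c)) c v)); first exact: connect0.
  move=> x y cx Px /= /and3P[hxy xS yS].
  apply: connect_trans Px (connect1 _) => /=.
  have xR : x \in reach S c by rewrite inE.
  by rewrite hxy xR (Rstep x y).
- apply/forall_inP=> a aR; apply/implyP=> ha; apply/forallP=> w; apply/implyP=> haw.
  have aS := fintype.subsetP RS a aR.
  have /implyP/(_ ha)/forallP/(_ w)/implyP/(_ haw) wS := forall_inP hand a aS.
  exact: Rstep haw.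
- apply/forall_inP=> o oR; apply/implyP=> ho.
  have oS := fintype.subsetP RS o oR.
  have E : [set w in reach S c | edge o w] = [set w in S | edge o w].
    apply/finset.setP=> w; rewrite !inE.
    apply/andP/andP=> [][h1 h2]; split=> //.
      by apply: (fintype.subsetP RS); rewrite inE.
    by have := Rstep o w oR h1 h2; rewrite inE.
  by rewrite E; move: (forall_inP hor o oS); rewrite ho.
Qed.


Lemma rank_andch a k u : edge u a -> isAnd a -> rank (andch k a) = (rank u).+2.
Proof.
move=> hua ha; rewrite (edge_rank (edge_andch k hua ha)) (edge_rank hua) //.
Qed.

Lemma nodeset_andch a k : isAnd a -> exists J d f, a = AndN N F J d f /\
  nodeset (andch k a) = restr N F X J f k.
Proof. by case: a => [[[J d]|[J d]]|[[J d] f]] //= _; exists J, d, f. Qed.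

Lemma natc1 a b : a = b.+1 -> (a.+2 <= b)%N -> False.
Proof. lia. Qed.
Lemma natc2 a b : a.+1 = b.+1 -> (a.+2 <= b)%N -> False.
Proof. lia. Qed.

Lemma decomp_facts u a (S0 S1 : {set node}) :
  isAnd a -> edge u a ->
  rooted (andch false a) S0 -> rooted (andch true a) S1 ->
  let S := u |: (a |: (S0 :|: S1)) in
  [/\ u \notin a |: (S0 :|: S1), a \notin S0 :|: S1, [disjoint S0 & S1],
     (forall w, w \in S -> edge u w = (w == a)) &
     (forall k v w, v \in (if k then S1 else S0) -> w \in S -> edge v w ->
        w \in (if k then S1 else S0))].
Proof.
move=> ha hua r0 r1 S.
have ra := edge_rank hua.
have rc k := rank_andch k hua ha.
have rk : forall k v, v \in (if k then S1 else S0) -> ((rank u).+2 <= rank v)%N.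
  by case=> v /= hv; [have [h _ _] := r1 v hv | have [h _ _] := r0 v hv];
     move: h; rewrite rc.
have nk : forall k v, v \in (if k then S1 else S0) ->
    nodeset v \subset nodeset (andch k a) /\ nodeset v != finset.set0.
  by case=> v /= hv; [have [_ h h'] := r1 v hv | have [_ h h'] := r0 v hv].
have [J [d [f [ea en]]]] := nodeset_andch false ha.
have en' k : nodeset (andch k a) = restr N F X J f k by rewrite ea.
have dis : [disjoint S0 & S1].
  apply/pred0P=> v /=; apply/negbTE/negP=> /andP[v0 v1].
  have [s0 ne] := nk false v v0; have [s1 _] := nk true v v1.
  have [i hi] := set0Pn _ ne.
  have := fintype.subsetP s0 i hi; have := fintype.subsetP s1 i hi.
  by rewrite !en' !inE; case: (X i f); rewrite ?andbF ?andbT.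
have nu : u \notin a |: (S0 :|: S1).
  rewrite !inE; apply/negP=> /or3P[/eqP e|h|h].
  - by move: ra; rewrite -e => /n_Sn.
  - by have := rk false u h; rewrite ltnNge leqnSn.
  - by have := rk true u h; rewrite ltnNge leqnSn.
have na : a \notin S0 :|: S1.
  rewrite !inE; apply/negP=> /orP[h|h].
  - by have := rk false a h; rewrite ra ltnn.
  - by have := rk true a h; rewrite ra ltnn.
split=> //.
- move=> w; rewrite !inE => /or4P[/eqP->|/eqP->|h|h].
  + rewrite (_ : (u == a) = false); last by apply/negbTE; apply: contraNneq nu => ->; rewrite !inE eqxx.
    by apply/negbTE/negP=> /edge_rank /n_Sn.
  + by rewrite hua eqxx.
  + have := rk false w h; rewrite (_ : (w == a) = false); last by apply/negbTE; apply: contraNneq na => <-; rewrite !inE h.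
    by move=> hw; apply/negbTE/negP=> /edge_rank hh; move: hw; rewrite hh ltnn.
  + have := rk true w h; rewrite (_ : (w == a) = false); last by apply/negbTE; apply: contraNneq na => <-; rewrite !inE h orbT.
    by move=> hw; apply/negbTE/negP=> /edge_rank hh; move: hw; rewrite hh ltnn.
- move=> k v w hv; rewrite !inE => hw hvw.
  have rv := rk k v hv; have rw := edge_rank hvw.
  have [sv nv] := nk k v hv.
  have [sw nw _] := edge_set hvw.
  case/or4P: hw => [/eqP e|/eqP e|h|h].
  + by move: rw rv; rewrite e => h1 h2; exfalso; exact: natc1 h1 h2.
  + by move: rw rv; rewrite e ra => h1 h2; exfalso; exact: natc2 h1 h2.
  + case: k hv sv rv {nv} => //= hv sv rv.
    have [i hi] := set0Pn _ nw.
    have [s0 _] := nk false w h.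
    have := fintype.subsetP s0 i hi.
    have := fintype.subsetP sv i (fintype.subsetP sw i hi).
    by rewrite !en' !inE; case: (X i f); rewrite ?andbF ?andbT.
  + case: k hv sv rv {nv} => //= hv sv rv.
    have [i hi] := set0Pn _ nw.
    have [s1 _] := nk true w h.
    have := fintype.subsetP s1 i hi.
    have := fintype.subsetP sv i (fintype.subsetP sw i hi).
    by rewrite !en' !inE; case: (X i f); rewrite ?andbF ?andbT.
Qed.


Lemma ecost_and a w : isAnd a -> ecost a w = 0%E.
Proof. by case: a => [[[J d]|[J d]]|[[J d] f]]. Qed.

Lemma inner_closed (S B : {set node}) v :
  B \subset S -> (forall w, w \in S -> edge v w -> w \in B) ->
  (\sum_(w in S | edge v w) ecost v w = \sum_(w in B | edge v w) ecost v w)%E.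
Proof.
move=> sB h; apply: eq_bigl => w.
apply/andP/andP=> [][h1 h2]; split=> //; first exact: h.
exact: (fintype.subsetP sB).
Qed.

Lemma cost_and u a (S0 S1 : {set node}) :
  isAnd a -> edge u a ->
  rooted (andch false a) S0 -> rooted (andch true a) S1 ->
  ps_cost (u |: (a |: (S0 :|: S1))) = (ecost u a + (ps_cost S0 + ps_cost S1))%E.
Proof.
move=> ha hua r0 r1.
have [nu na dis hu hk] := decomp_facts ha hua r0 r1.
set S := u |: (a |: (S0 :|: S1)).
have s0S : S0 \subset S by apply/fintype.subsetP=> v hv; rewrite !inE hv ?orbT.
have s1S : S1 \subset S by apply/fintype.subsetP=> v hv; rewrite !inE hv ?orbT.
rewrite /ps_cost /S big_setU1 // big_setU1 //.
rewrite (eq_bigl [predU S0 & S1]); last by move=> v; rewrite !inE.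
rewrite bigU // -/S.
have e1 : (\sum_(w in S | edge u w) ecost u w)%E = ecost u a.
  rewrite (eq_bigl (pred1 a)) ?big_pred1_eq // => w /=.
  case wS: (w \in S); first by rewrite hu.
  by apply/esym/negbTE; apply: contraFneq wS => ->; rewrite !inE eqxx orbT.
have e2 : (\sum_(w in S | edge a w) ecost a w)%E = 0%E.
  by rewrite big1 // => w _; rewrite ecost_and.
have e3 : (\sum_(v in S0) \sum_(w in S | edge v w) ecost v w)%E = ps_cost S0.
  apply: eq_bigr => v hv; apply: inner_closed => // w wS hvw.
  exact: (hk false v w hv wS hvw).
have e4 : (\sum_(v in S1) \sum_(w in S | edge v w) ecost v w)%E = ps_cost S1.
  apply: eq_bigr => v hv; apply: inner_closed => // w wS hvw.
  exact: (hk true v w hv wS hvw).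
rewrite e1 e2 e3 e4 /=.
by rewrite add0e.
Qed.

Lemma term_noout u t w : isOr u -> edge u t -> ~~ isAnd t -> edge t w = false.
Proof.
case: u => [[[J d]|[J d]]|[[J d] f]] //= _.
by case: t => [[[J' d']|[J' d']]|[[J' d'] f']] //=; case: w => [[[? ?]|[? ?]]|[[? ?] ?]].
Qed.

Lemma term_eq u t : isOr u -> edge u t -> ~~ isAnd t -> t = term u.
Proof.
case: u => [[[J d]|[J d]]|[[J d] f]] //= _.
case: t => [[[J' d']|[J' d']]|[[J' d'] f']] //=.
by case/andP=> /andP[_ /eqP ->] /eqP ->.
Qed.

Lemma edge_term u : isOr u -> nodeset u != finset.set0 -> edge u (term u).
Proof.
by case: u => [[[J d]|[J d]]|[[J d] f]] //= _ h; rewrite h !eqxx.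
Qed.

Lemma isAnd_or u : isOr u -> isAnd u = false.
Proof. by case: u => [[[J d]|[J d]]|[[J d] f]]. Qed.

Lemma term_notAnd u : isOr u -> isAnd (term u) = false.
Proof. by case: u => [[[J d]|[J d]]|[[J d] f]]. Qed.

Lemma term_notOr u : isOr u -> isOr (term u) = false.
Proof. by case: u => [[[J d]|[J d]]|[[J d] f]]. Qed.

Lemma cost_term u t : isOr u -> edge u t -> ~~ isAnd t ->
  ps_cost (u |: [set t]) = ecost u t.
Proof.
move=> hu hut ht.
have tu : u \notin [set t].
  by rewrite inE; apply/negP=> /eqP e; move: (edge_rank hut); rewrite e => /n_Sn.
rewrite /ps_cost big_setU1 // big_set1.
have -> : (\sum_(w in u |: [set t] | edge t w) ecost t w)%E = 0%E.
  by rewrite big_pred0 // => w; rewrite (term_noout _ hu hut ht) andbF.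
rewrite (eq_bigl (pred1 t)) ?big_pred1_eq /=; first by rewrite adde0.
move=> w /=; rewrite !inE; case: (eqVneq w t) => [->|nt]; first by rewrite orbT hut.
rewrite orbF; case: (eqVneq w u) => [->|nu] //=.
by apply/negbTE/negP=> /edge_rank /n_Sn.
Qed.

Lemma rooted_ps G c S : partial_sol G c S -> nodeset c != finset.set0 -> rooted c S.
Proof.
case/and5P=> _ _ hconn _ _ hc v vS.
exact: rooted_connect hc v (forall_inP hconn v vS).
Qed.

Lemma ps_sub G c S : partial_sol G c S -> S \subset G.
Proof. by case/and5P. Qed.
Lemma ps_root G c S : partial_sol G c S -> c \in S.
Proof. by case/and5P. Qed.
Lemma ps_and G c S a w : partial_sol G c S -> a \in S -> isAnd a -> edge a w -> w \in S.
Proof.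
case/and5P=> _ _ _ hand _ aS ha haw.
by have /implyP/(_ ha)/forallP/(_ w)/implyP/(_ haw) := forall_inP hand a aS.
Qed.
Lemma ps_or G c S o : partial_sol G c S -> o \in S -> isOr o ->
  #|[set w in S | edge o w]| = 1%N.
Proof.
case/and5P=> _ _ _ _ hor oS ho.
by apply/eqP; have /implyP/(_ ho) := forall_inP hor o oS.
Qed.
Lemma ps_conn G c S v : partial_sol G c S -> v \in S -> connect (er S) c v.
Proof. by case/and5P=> _ _ hconn _ _ vS; apply: (forall_inP hconn). Qed.

Lemma ac_nonempty u a k : edge u a -> isAnd a -> nodeset (andch k a) != finset.set0.
Proof. by move=> hua ha; have [_ ? _] := edge_set (edge_andch k hua ha). Qed.

Lemma build_and (G : {set node}) u a (S0 S1 : {set node}) :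
  u \in G -> a \in G -> isOr u -> isAnd a -> edge u a ->
  partial_sol G (andch false a) S0 -> partial_sol G (andch true a) S1 ->
  partial_sol G u (u |: (a |: (S0 :|: S1))).
Proof.
move=> uG aG hu ha hua p0 p1.
have pk : forall k, partial_sol G (andch k a) (if k then S1 else S0) by case.
have r0 := rooted_ps p0 (ac_nonempty false hua ha).
have r1 := rooted_ps p1 (ac_nonempty true hua ha).
have [nu na dis hU hk] := decomp_facts ha hua r0 r1.
set S := u |: (a |: (S0 :|: S1)).
have skS : forall k, (if k then S1 else S0) \subset S.
  by case; apply/fintype.subsetP=> v hv; rewrite !inE hv ?orbT.
have uS : u \in S by rewrite !inE eqxx.
have aS : a \in S by rewrite !inE eqxx orbT.
have ckS : forall k, andch k a \in S.
  by move=> k; apply: (fintype.subsetP (skS k)); apply: ps_root (pk k).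
have ua : connect (er S) u a by apply: connect1 => /=; rewrite hua uS aS.
have uc : forall k, connect (er S) u (andch k a).
  move=> k; apply: connect_trans ua (connect1 _) => /=.
  by rewrite (edge_andch k hua ha) aS ckS.
have Scase : forall v, v \in S -> [\/ v = u, v = a | exists k, v \in (if k then S1 else S0)].
  move=> v; rewrite !inE => /or4P[/eqP->|/eqP->|h|h]; [by constructor 1|by constructor 2|
    by constructor 3; exists false|by constructor 3; exists true].
apply/and5P; split.
- apply/fintype.subsetP=> v /Scase [->|->|[k hv]] //.
  exact: (fintype.subsetP (ps_sub (pk k))).
- exact: uS.
- apply/forall_inP=> v /Scase [->|->|[k hv]]; [exact: connect0|exact: ua|].
  apply: connect_trans (uc k) _.
  apply: connect_sub (ps_conn (pk k) hv) => x y /= /and3P[hxy hx hy].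
  apply: connect1 => /=; rewrite hxy.
  by rewrite (fintype.subsetP (skS k) x hx) (fintype.subsetP (skS k) y hy).
- apply/forall_inP=> v vS; apply/implyP=> hv; apply/forallP=> w; apply/implyP=> hvw.
  case: (Scase v vS) => [e|e|[k hk']].
  + by move: hv; rewrite e isAnd_or.
  + subst v; case: (edge_and_inv ha hvw) => ->; exact: ckS.
  + exact: (fintype.subsetP (skS k)) (ps_and (pk k) hk' hv hvw).
- apply/forall_inP=> v vS; apply/implyP=> hv.
  case: (Scase v vS) => [e|e|[k hk']].
  + subst v; have -> : [set w in S | edge u w] = [set a].
      by apply/finset.setP=> w; rewrite finset.in_set finset.in_set1; case wS: (w \in S) => /=; [rewrite hU|
        apply/esym/negbTE; apply: contraFneq wS => ->].
    by rewrite cards1.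
  + by move: hv; rewrite e => hv; move: ha; rewrite isAnd_or.
  + have -> : [set w in S | edge v w] = [set w in (if k then S1 else S0) | edge v w].
      apply/finset.setP=> w; rewrite [in LHS]finset.in_set [in RHS]finset.in_set; apply/andP/andP=> [][h1 h2]; split=> //.
        exact: (hk k v w hk' h1 h2).
      exact: (fintype.subsetP (skS k)).
    by rewrite (ps_or (pk k) hk' hv).
Qed.

Lemma build_term (G : {set node}) u : u \in G -> term u \in G -> isOr u ->
  nodeset u != finset.set0 -> partial_sol G u (u |: [set term u]).
Proof.
move=> uG tG hu hne.
have hut := edge_term hu hne.
set t := term u in tG hut *.
set S := u |: [set t].
have uS : u \in S by rewrite !inE eqxx.
have tS : t \in S by rewrite !inE eqxx orbT.
have Scase : forall v, v \in S -> v = u \/ v = t.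
  by move=> v; rewrite !inE => /orP[/eqP->|/eqP->]; [left|right].
apply/and5P; split.
- by apply/fintype.subsetP=> v /Scase [->|->].
- exact: uS.
- apply/forall_inP=> v /Scase [->|->]; first exact: connect0.
  by apply: connect1 => /=; rewrite hut uS tS.
- apply/forall_inP=> v /Scase [->|->]; first by rewrite isAnd_or.
  by rewrite /t term_notAnd.
- apply/forall_inP=> v /Scase [->|->]; last by rewrite /t term_notOr.
  apply/implyP=> _; have -> : [set w in S | edge u w] = [set t].
    apply/finset.setP=> w; rewrite finset.in_set finset.in_set1.
    case: (eqVneq w t) => [->|nt]; first by rewrite tS hut.
    apply/negbTE/negP=> /andP[/Scase [e|e] h]; last by rewrite e eqxx in nt.
    by move: h; rewrite e => /edge_rank /n_Sn.
  by rewrite cards1.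
Qed.

Lemma ps_child G u S : partial_sol G u S -> isOr u ->
  exists w, [/\ w \in S, edge u w & forall w', w' \in S -> edge u w' -> w' = w].
Proof.
move=> pS hu; have /eqP/cards1P [w hw] := ps_or pS (ps_root pS) hu.
have : w \in [set w' in S | edge u w'] by rewrite hw inE.
rewrite finset.in_set => /andP[wS huw]; exists w; split=> // w' w'S huw'.
have : w' \in [set w' in S | edge u w'] by rewrite finset.in_set w'S.
by rewrite hw inE => /eqP.
Qed.

Lemma decomp_and G u S a : partial_sol G u S -> isOr u -> isAnd a -> a \in S -> edge u a ->
  (forall w', w' \in S -> edge u w' -> w' = a) ->
  S = u |: (a |: (reach S (andch false a) :|: reach S (andch true a))).
Proof.
move=> pS hu ha aS hua huniq.
have ckS k : andch k a \in S by apply: ps_and pS aS ha (edge_andch k hua ha).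
apply/eqP; rewrite finset.eqEsubset; apply/andP; split.
- apply/fintype.subsetP=> v vS; have := ps_conn pS vS; clear vS; move: v.
  apply: (connect_ind_from (P := fun v => v \in u |: (a |: (reach S (andch false a) :|: reach S (andch true a))))).
    by rewrite !inE eqxx.
  move=> x y _; rewrite !inE => /or4P[/eqP->|/eqP->|h|h] /= /and3P[hxy xS yS].
  + by rewrite (huniq y yS hxy) eqxx orbT.
  + by case: (edge_and_inv ha hxy) => ->; rewrite connect0 ?orbT.
  + apply/orP; right; apply/orP; right; apply/orP; left.
    by apply: connect_trans h (connect1 _) => /=; rewrite hxy xS yS.
  + apply/orP; right; apply/orP; right; apply/orP; right.
    by apply: connect_trans h (connect1 _) => /=; rewrite hxy xS yS.
- apply/fintype.subsetP=> v; rewrite !inE => /or4P[/eqP->|/eqP->|h|h] //.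
  + exact: ps_root pS.
  + by apply: (fintype.subsetP (reach_sub (ckS false))); rewrite inE.
  + by apply: (fintype.subsetP (reach_sub (ckS true))); rewrite inE.
Qed.

Lemma decomp_term G u S t : partial_sol G u S -> isOr u -> ~~ isAnd t -> t \in S -> edge u t ->
  (forall w', w' \in S -> edge u w' -> w' = t) -> S = u |: [set t].
Proof.
move=> pS hu ht tS hut huniq.
apply/eqP; rewrite finset.eqEsubset; apply/andP; split.
- apply/fintype.subsetP=> v vS; have := ps_conn pS vS; clear vS; move: v.
  apply: (connect_ind_from (P := fun v => v \in u |: [set t])); first by rewrite !inE eqxx.
  move=> x y _; rewrite !inE => /orP[/eqP->|/eqP->] /= /and3P[hxy xS yS].
  + by rewrite (huniq y yS hxy) eqxx orbT.
  + by rewrite (term_noout _ hu hut ht) in hxy.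
- apply/fintype.subsetP=> v; rewrite !inE => /orP[/eqP->|/eqP->] //.
  exact: ps_root pS.
Qed.

Lemma rooted_reach S c : nodeset c != finset.set0 -> rooted c (reach S c).
Proof. by move=> hc v; rewrite inE; apply: rooted_connect. Qed.


Lemma bm_le_seq (I : eqType) (r : seq I) (P : pred I) (f : I -> \bar R) i :
  i \in r -> P i -> (\big[Order.min/+oo%E]_(j <- r | P j) f j <= f i)%E.
Proof.
elim: r => // x r IH; rewrite inE big_cons => /orP[/eqP <-|ir] Pi.
  by rewrite Pi ge_min lexx.
case: (P x); last exact: IH.
by rewrite ge_min IH ?orbT.
Qed.

Lemma bm_le (I : finType) (P : pred I) (f : I -> \bar R) i :
  P i -> (\big[Order.min/+oo%E]_(j | P j) f j <= f i)%E.
Proof. by apply: bm_le_seq; rewrite mem_index_enum. Qed.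

Lemma le_bm (I : finType) (P : pred I) (f : I -> \bar R) x :
  (forall i, P i -> x <= f i)%E -> (x <= \big[Order.min/+oo%E]_(j | P j) f j)%E.
Proof.
move=> h; apply: (big_ind (fun y => x <= y)%E) => //; first exact: leey.
by move=> a b ha hb; rewrite le_min ha hb.
Qed.

Lemma bm_ex (I : finType) (P : pred I) (f : I -> \bar R) :
  (exists i, P i /\ \big[Order.min/+oo%E]_(j | P j) f j = f i) \/
  \big[Order.min/+oo%E]_(j | P j) f j = +oo%E.
Proof.
apply: (big_ind (fun y => (exists i, P i /\ y = f i) \/ y = +oo%E)); first by right.
  by move=> a b ha hb; case: leP.
by move=> i Pi; left; exists i.
Qed.

Lemma adde_nn (x y : \bar R) : x != -oo%E -> y != -oo%E -> (x + y)%E != -oo%E.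
Proof. by case: x => [x||] //; case: y => [y||]. Qed.

Lemma nlog_nn x : nlog R x != -oo%E.
Proof. by rewrite /nlog; case: ifP. Qed.

Lemma ecost_nn u w : ecost u w != -oo%E.
Proof.
case: u => [[[J d]|[J d]]|[[J d] f]]; case: w => [[[J' d']|[J' d']]|[[J' d'] f']] //=;
  by rewrite ?adde_nn ?nlog_nn.
Qed.

Lemma ps_cost_nn S : ps_cost S != -oo%E.
Proof.
apply: (big_ind (fun y => y != -oo%E)) => //; first exact: adde_nn.
move=> v _; apply: (big_ind (fun y => y != -oo%E)) => //; first exact: adde_nn.
by move=> w _; apply: ecost_nn.
Qed.

Lemma min_ps_nn G u : min_ps G u != -oo%E.
Proof.
rewrite /Defs.min_ps.
apply: (big_ind (fun y => y != -oo%E)) => //; last by move=> S _; apply: ps_cost_nn.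
by move=> a b ha hb; case: leP.
Qed.

Lemma min_ps_le G u S : partial_sol G u S -> (min_ps G u <= ps_cost S)%E.
Proof. by move=> pS; rewrite /Defs.min_ps; exact: (@bm_le _ (fun S => partial_sol G u S) (fun S => ps_cost S) S pS). Qed.

Lemma min_ps_ex G u : (exists S, partial_sol G u S /\ min_ps G u = ps_cost S) \/ min_ps G u = +oo%E.
Proof. by rewrite /Defs.min_ps; exact: (@bm_ex _ (fun S => partial_sol G u S) (fun S => ps_cost S)). Qed.

Lemma orval_le_and v u a : edge u a -> isAnd a -> (orval v u <= ecost u a + valA v a)%E.
Proof.
move=> hua ha; rewrite /Defs.orval ge_min; apply/orP; left.
by apply: (@bm_le _ (fun a => edge u a && isAnd a) (fun a => (ecost u a + valA v a)%E) a); rewrite hua ha.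
Qed.

Lemma orval_le_term v u : (orval v u <= ecost u (term u))%E.
Proof. by rewrite /Defs.orval ge_min lexx orbT. Qed.

Lemma orval_ext v v' u : (forall a k, edge u a -> isAnd a -> v (andch k a) = v' (andch k a)) ->
  orval v u = orval v' u.
Proof.
move=> h; rewrite /Defs.orval (eq_bigr (fun a => (ecost u a + valA v' a)%E)) //.
by move=> a /andP[hua ha]; rewrite /Defs.valA !h.
Qed.

Lemma orval_mono v v' u : (forall a k, edge u a -> isAnd a -> (v (andch k a) <= v' (andch k a))%E) ->
  (orval v u <= orval v' u)%E.
Proof.
move=> h; rewrite /Defs.orval; apply: le_min2; last exact: lexx.
apply: (big_ind2 (fun x y => (x <= y)%E)) => [|x1 x2 y1 y2 h1 h2|a /andP[hua ha]].
- exact: lexx.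
- exact: le_min2.
- apply: leeD; first exact: lexx.
  by rewrite /Defs.valA; apply: leeD; apply: h.
Qed.

Definition sinv (G E : {set node}) :=
  [/\ (forall x w, x \in E -> edge x w -> w \in G /\ (forall z, edge w z -> z \in G)),
      (forall x y, isOr x -> edge x y -> y \in G -> x \in E),
      (forall u, u \in G -> nodeset u != finset.set0),
      E \subset G &
      (forall x, x \in E -> isOr x)].

Lemma min_ps_unexp (G E : {set node}) u :
  (forall x y, isOr x -> edge x y -> y \in G -> x \in E) -> isOr u -> u \notin E ->
  min_ps G u = +oo%E.
Proof.
move=> h3 hu uE; rewrite /Defs.min_ps big_pred0 // => S; apply/negbTE/negP => pS.
have [w [wS huw _]] := ps_child pS hu.
by move: uE; rewrite (h3 u w hu huw (fintype.subsetP (ps_sub pS) w wS)).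
Qed.

Lemma bellman G E u : sinv G E -> u \in E -> min_ps G u = orval (min_ps G) u.
Proof.
case=> h2 h3 h7 h8 h9 uE.
have hu := h9 u uE.
have uG := fintype.subsetP h8 u uE.
have hne := h7 u uG.
have hut := edge_term hu hne.
have tG : term u \in G by case: (h2 u (term u) uE hut).
apply/eqP; rewrite eq_le; apply/andP; split.
- rewrite /Defs.orval le_min; apply/andP; split.
  + apply: le_bm => a /andP[hua ha]; rewrite /Defs.valA.
    have [aG gG] := h2 u a uE hua.
    have [[S0 [p0 e0]]|e0] := min_ps_ex G (andch false a); last first.
      by rewrite e0 addye ?min_ps_nn // addey ?ecost_nn // leey.
    have [[S1 [p1 e1]]|e1] := min_ps_ex G (andch true a); last first.
      by rewrite e1 addey ?min_ps_nn // addey ?ecost_nn // leey.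
    have r0 := rooted_ps p0 (ac_nonempty false hua ha).
    have r1 := rooted_ps p1 (ac_nonempty true hua ha).
    rewrite e0 e1 -(cost_and ha hua r0 r1).
    by apply: min_ps_le; apply: build_and.
  + rewrite -(cost_term hu hut (negbT (term_notAnd hu))).
    by apply: min_ps_le; apply: build_term.
- apply: le_bm => S pS.
  have [w [wS huw huniq]] := ps_child pS hu.
  case ha: (isAnd w).
  + have -> : ps_cost S = (ecost u w + (ps_cost (reach S (andch false w)) +
                                        ps_cost (reach S (andch true w))))%E.
      rewrite {1}(decomp_and pS hu ha wS huw huniq) cost_and //.
      * exact: rooted_reach (ac_nonempty false huw ha).
      * exact: rooted_reach (ac_nonempty true huw ha).
    apply: le_trans (orval_le_and _ huw ha) _.
    apply: leeD; first exact: lexx.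
    by rewrite /Defs.valA; apply: leeD; apply: min_ps_le; apply: ps_reach (pS) _;
      apply: ps_and (pS) wS ha (edge_andch _ huw ha).
  + have ht : ~~ isAnd w by rewrite ha.
    rewrite {1}(decomp_term pS hu ht wS huw huniq) cost_term // (term_eq hu huw ht).
    exact: orval_le_term.
Qed.


Lemma depth_andch u a k : edge u a -> isAnd a ->
  depth (andch k a) = (depth u).+1 /\ (depth u < F)%N.
Proof.
case: u => [[[J d]|[J d]]|[[J d] f]]; case: a => [[[J' d']|[J' d']]|[[J' d'] f']] //=.
by case/and5P=> _ _ /eqP -> hd _ _; rewrite dsuccE.
Qed.

Lemma natc3 d n : (d < F)%N -> (F - d < n.+1)%N -> (F - d.+1 < n)%N.
Proof. lia. Qed.

Lemma rank_andch_neq u a k : edge u a -> isAnd a -> andch k a != u.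
Proof.
move=> hua ha; apply/eqP=> e; have := rank_andch k hua ha; rewrite e.
by move/eqP; rewrite -addn2 -{1}(addn0 (rank u)) eqn_add2l.
Qed.

Lemma final_eq (G E : {set node}) (T v : node -> \bar R) :
  (forall u, u \in G -> isOr u -> u \in E -> T u = orval T u) ->
  (forall u a k, u \in E -> edge u a -> isAnd a -> andch k a \in G) ->
  (forall u, u \in G -> isOr u -> u \notin E -> T u = v u) ->
  (forall u, u \in G -> isOr u -> (T u <= v u)%E) ->
  (forall u, u \in E -> (v u <= orval v u)%E) ->
  forall u, u \in G -> isOr u -> v u = T u.
Proof.
move=> H1 H2 H3 P1 P2.
suff h : forall n u, (F - depth u < n)%N -> u \in G -> isOr u -> v u = T u.
  by move=> u; apply: (h (F - depth u).+1 u (ltnSn _)).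
elim=> // n IH u hn uG hu.
case uE: (u \in E); last by rewrite (H3 u uG hu (negbT uE)).
apply/eqP; rewrite eq_le (P1 u uG hu) andbT.
apply: le_trans (P2 u uE) _; rewrite (H1 u uG hu uE).
rewrite (@orval_ext v T u); first exact: lexx.
move=> a k hua ha; have [hd hdF] := depth_andch k hua ha.
apply: IH; [by rewrite hd; apply: natc3 | exact: H2 uE hua ha | exact: isOr_andch].
Qed.

Lemma prop_ok (G E : {set node}) (T : node -> \bar R) Q v v' :
  propagate R N F X Y rho1 rho0 alpha beta (fun nw old => (nw < old)%E) G Q v v' ->
  (forall u, u \in E -> T u = orval T u) ->
  (forall u a k, u \in E -> edge u a -> isAnd a -> andch k a \in G /\ a \in G) ->
  (forall w, w \in E -> w \in G /\ isOr w) ->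
  (forall u w, w \in parents N F X G u -> w \in E) ->
  (forall w, w \in Q -> w \in E) ->
  (forall u, u \in G -> isOr u -> (T u <= v u)%E) ->
  (forall u, u \in E -> u \notin Q -> (v u <= orval v u)%E) ->
  [/\ (forall u, u \in G -> isOr u -> (T u <= v' u)%E),
      (forall u, u \in E -> (v' u <= orval v' u)%E) &
      (forall u, u \notin E -> v' u = v u)].
Proof.
move=> hp H1 H2 H3 H4; elim: hp => {Q v v'}.
  move=> v _ P1 P2; split=> // u uE; apply: P2 uE _; by rewrite finset.in_set0.
move=> Q v v'' u uQ _ hrec IH HQ P1 P2.
have uE := HQ u uQ.
have [uG hu] := H3 u uE.
move: IH; cbv beta; case hb: (orval v u < v u)%E => IH.
- set v1 := fun w => if w == u then orval v u else v w.
  have ext : forall w, w \in E -> w \notin parents N F X G u -> orval v1 w = orval v w.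
    move=> w wE wP; apply: orval_ext => a k hwa ha; rewrite /v1.
    case: eqP => // e; exfalso; move/negP: wP; apply.
    have [wG hw] := H3 w wE.
    have [cG aG] := H2 w a k wE hwa ha.
    rewrite finset.in_set wG hw /=; apply/existsP; exists a; rewrite aG ha hwa /=.
    by rewrite -e (edge_andch k hwa ha).
  have extu : orval v1 u = orval v u.
    apply: orval_ext => a k hua ha; rewrite /v1.
    by rewrite (negbTE (rank_andch_neq k hua ha)).
  have HQ1 : forall w, w \in (Q :\ u) :|: parents N F X G u -> w \in E.
    move=> w; rewrite finset.in_setU finset.in_setD1 => /orP[/andP[_ h]|h].
      exact: HQ.
    exact: H4 h.
  have P1' : forall w, w \in G -> isOr w -> (T w <= v1 w)%E.
    move=> w wG hw; rewrite /v1; case: eqP => [->|_]; last exact: P1.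
    rewrite (H1 u uE); apply: orval_mono => a k hua ha.
    have [cG _] := H2 u a k uE hua ha.
    exact: P1 cG (isOr_andch k ha).
  have P2' : forall w, w \in E -> w \notin (Q :\ u) :|: parents N F X G u ->
      (v1 w <= orval v1 w)%E.
    move=> w wE; rewrite finset.in_setU finset.in_setD1 negb_or => /andP[h1 h2].
    case: (eqVneq w u) => [->|ne].
      by rewrite extu /v1 eqxx; exact: lexx.
    rewrite ext // /v1 (negbTE ne); apply: P2 wE _.
    by move: h1; rewrite ne.
  have [C1 C2 C3] := IH HQ1 P1' P2'.
  split=> // w wE; rewrite C3 // /v1; case: eqP => // e.
  by move: wE; rewrite e uE.
- have HQ1 : forall w, w \in Q :\ u -> w \in E.
    by move=> w; rewrite finset.in_setD1 => /andP[_ h]; exact: HQ.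
  have P2' : forall w, w \in E -> w \notin Q :\ u -> (v w <= orval v w)%E.
    move=> w wE; rewrite finset.in_setD1 negb_and negbK.
    case: (eqVneq w u) => [->|ne] /= h; first by rewrite leNgt hb.
    exact: P2.
  exact: IH HQ1 P1 P2'.
Qed.

Local Notation init := (Defs.init R N F Y rho1 rho0 alpha beta).
Local Notation root := (Defs.root N F).

Definition Inv (s : state R N F) :=
  [/\ sinv (Gp s) (Ex s), root \in Gp s,
      (forall u, u \in Gp s -> isOr u -> UB s u = min_ps (Gp s) u) &
      (forall u, u \notin Gp s -> UB s u = +oo%E)].

Lemma min_ps_mono (G1 G2 : {set node}) u : G1 \subset G2 -> (min_ps G2 u <= min_ps G1 u)%E.
Proof.
move=> h; rewrite [X in (_ <= X)%E]/Defs.min_ps; apply: le_bm => S pS; apply: min_ps_le.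
move: pS; case/and5P=> sG uS h1 h2 h3; apply/and5P; split=> //.
exact: fintype.subset_trans sG h.
Qed.

Lemma descend_ok s x y : Inv s -> descend R N F X Y rho1 rho0 alpha beta s x y ->
  x \in Gp s -> isOr x -> [/\ y \in Gp s, isOr y & y \notin Ex s].
Proof.
move=> [[h2 h3 h7 h8 h9] _ _ _] hd; elim: hd => {x y}.
  by move=> o oE oG ho; split.
move=> o a o' oE hoa ha _ hnext IH oG ho; apply: IH.
  by case: ifP => _; have [_ hz] := h2 o a oE hoa; apply: hz; exact: edge_andch hoa ha.
by case: ifP => _; apply: isOr_andch.
Qed.

Lemma inv_init : (0 < N)%N -> Inv init.
Proof.
move=> hN.
have h3 : forall x y, isOr x -> edge x y -> y \in [set root] -> x \in (finset.set0 : {set node}).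
  move=> x y hx hxy; rewrite inE => /eqP ey; move: hx; rewrite (edge_isOr hxy) ey.
  by [].
split=> //=.
- split=> //.
  + by move=> x w; rewrite finset.in_set0.
  + move=> u; rewrite inE => /eqP ->; apply/set0Pn; exists (Ordinal hN).
    by rewrite inE.
  + exact: finset.sub0set.
  + by move=> x; rewrite finset.in_set0.
- exact: finset.set11.
- move=> u uG hu; symmetry; apply: (min_ps_unexp h3 hu).
  by rewrite finset.in_set0.
Qed.

Lemma inv_step s s' : Inv s -> iteration R N F X Y rho1 rho0 alpha beta s s' -> Inv s'.
Proof.
move=> Is; case: (Is) => [hs rG HU HO].
case: (hs) => [h2 h3 h7 h8 h9].
move=> [_ [ o [hd [lb [ub [_ [hprop ->]]]]]]].
have [oG ho oE] := descend_ok Is hd rG (erefl true).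
set G := Gp s :|: [set w | edge o w] :|: [set w | [exists a, edge o a && edge a w]].
set E' := o |: Ex s.
have hprop' : propagate R N F X Y rho1 rho0 alpha beta (fun nw old => (nw < old)%E)
    G [set o] (UB s) ub := hprop.
have sG : Gp s \subset G.
  by apply/fintype.subsetP=> w wG; rewrite !inE wG.
have hsinv : sinv G E'.
  split.
  - move=> x w; rewrite finset.in_setU1 => /orP[/eqP->|xE] hxw.
      split; first by rewrite !inE hxw orbT.
      move=> z hwz; rewrite !inE; apply/orP; right; apply/existsP; exists w.
      by rewrite hxw hwz.
    have [wG hz] := h2 x w xE hxw; split; first exact: (fintype.subsetP sG).
    by move=> z hwz; apply: (fintype.subsetP sG); apply: hz.
  - move=> x y hx hxy; rewrite !inE => /orP[/orP[yG|hoy]|/existsP[a /andP[hoa hay]]].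
    + by rewrite (h3 x y hx hxy yG) orbT.
    + by rewrite (edge_or_uniq hx ho hxy hoy) eqxx.
    + move: (edge_isOr hoa) (edge_isOr hay) (edge_isOr hxy); rewrite ho hx.
      by case: (isOr a); case: (isOr y).
  - move=> u; rewrite !inE => /orP[/orP[uG|hou]|/existsP[a /andP[hoa hau]]].
    + exact: h7.
    + by have [_ ? _] := edge_set hou.
    + by have [_ ? _] := edge_set hau.
  - apply/fintype.subsetP=> x; rewrite finset.in_setU1 => /orP[/eqP->|xE];
      apply: (fintype.subsetP sG) => //.
    exact: (fintype.subsetP h8).
  - by move=> x; rewrite finset.in_setU1 => /orP[/eqP->|xE] //; apply: h9.
have [s2 s3 s7 s8 s9] := hsinv.
have H2 : forall u a k, u \in E' -> edge u a -> isAnd a -> andch k a \in G /\ a \in G.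
  move=> u a k uE hua ha; have [aG hz] := s2 u a uE hua; split=> //.
  by apply: hz; exact: edge_andch hua ha.
have H1 : forall u, u \in E' -> min_ps G u = orval (min_ps G) u.
  by move=> u uE; apply: bellman hsinv uE.
have H3 : forall w, w \in E' -> w \in G /\ isOr w.
  by move=> w wE; split; [exact: (fintype.subsetP s8) | exact: s9].
have H4 : forall u w, w \in parents N F X G u -> w \in E'.
  move=> u w; rewrite finset.in_set => /andP[wG /andP[hw /existsP[a /andP[aG /and3P[ha hwa hau]]]]].
  exact: s3 w a hw hwa aG.
have HQ : forall w, w \in [set o] -> w \in E'.
  by move=> w; rewrite inE => /eqP->; rewrite finset.setU11.
have P1 : forall u, u \in G -> isOr u -> (min_ps G u <= UB s u)%E.
  move=> u uG hu; case uGs: (u \in Gp s); last by rewrite HO ?uGs //; exact: leey.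
  by rewrite HU //; exact: min_ps_mono sG.
have P2 : forall u, u \in E' -> u \notin [set o] -> (UB s u <= orval (UB s) u)%E.
  move=> u uE; rewrite inE => uo.
  have uEx : u \in Ex s by move: uE; rewrite finset.in_setU1 (negbTE uo).
  have uGs := fintype.subsetP h8 u uEx.
  rewrite HU ?h9 // (bellman hs uEx).
  rewrite (@orval_ext (min_ps (Gp s)) (UB s) u); first exact: lexx.
  move=> a k hua ha; have [_ hz] := h2 u a uEx hua.
  by rewrite HU // ?isOr_andch //; apply: hz; exact: edge_andch hua ha.
have [C1 C2 C3] := prop_ok hprop' H1 H2 H3 H4 HQ P1 P2.
split=> //=.
- exact: (fintype.subsetP sG).
- apply: final_eq (C1) (C2).
  + by move=> u _ _ uE; apply: H1.
  + by move=> u a k uE hua ha; case: (H2 u a k uE hua ha).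
  + move=> u uG hu uE; rewrite (min_ps_unexp s3 hu uE) C3 //.
    have uEx : u \notin Ex s by move: uE; rewrite finset.in_setU1 negb_or => /andP[].
    case uGs: (u \in Gp s); last by rewrite HO ?uGs.
    by rewrite HU // (min_ps_unexp h3 hu uEx).
- move=> u uG; rewrite C3; last first.
    by apply: contra uG; apply: (fintype.subsetP s8).
  by apply: HO; apply: contra uG; apply: (fintype.subsetP sG).
Qed.

Lemma main : (0 < N)%N -> forall s s' : state R N F,
    reachable R N F X Y rho1 rho0 alpha beta s ->
    iteration R N F X Y rho1 rho0 alpha beta s s' ->
    forall u : node, u \in Gp s' -> isOr u ->
      UB s' u = min_ps (Gp s') u.
Proof.
move=> hN s s' hr hit.
have Is : Inv s.
  elim: hr => [|s0 s1 _ IH hit']; first exact: inv_init.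
  exact: inv_step IH hit'.
by have [_ _ HU _] := inv_step Is hit.
Qed.

End Proof.

Unset Implicit Arguments.

Theorem lemma16 (R : realType) (N F : nat)
  (X : 'I_N -> 'I_F -> bool) (Y : 'I_N -> bool) (rho1 rho0 alpha beta : R) :
  (0 < N)%N -> 0 < rho1 -> 0 < rho0 -> 0 < alpha -> alpha < 1 -> 0 <= beta ->
  forall s s' : state R N F,
    reachable R N F X Y rho1 rho0 alpha beta s ->
    iteration R N F X Y rho1 rho0 alpha beta s s' ->
    forall u : node N F, u \in Gp s' -> isOr N F u ->
      UB s' u = min_ps R N F X Y rho1 rho0 alpha beta (Gp s') u.
Proof.
move=> hN _ _ _ _ _; exact: (@main R N F X Y rho1 rho0 alpha beta hN).
Qed.
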